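(* Let $S$ be a numerical semigroup with minimal generators $a_1<a_2<\cdots<a_\nu$ such that $a_2>\frac{c(S)+\mu(S)}{3}$, $\nu(S)\ge10$, and $c(S)\equiv0\pmod{\mu(S)}$. Then $S$ satisfies Wilf's conjecture, i.e. $\nu(S)|L(S)|\ge c(S)$.
   Context: A numerical semigroup is a submonoid $S\subseteq\mathbb{N}$ with finite complement. $\nu(S)$ is the number of minimal generators, $\mu(S)=a_1$ the multiplicity, $c(S)$ the conductor (least integer with $c(S)+\mathbb{N}\subseteq S$), and $L(S)=\{x\in S:0\le x<c(S)\}$. *)

(* Defs.v *)
From mathcomp Require Import all_boot.
Set Implicit Arguments. Unset Strict Implicit. Unset Printing Implicit Defensive.

Definition numerical_semigroup (S : pred nat) : Prop :=
  S 0 /\ (forall x y, S x -> S y -> S (x + y)) /\ (exists N, forall x, N <= x -> S x).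

Definition is_conductor (S : pred nat) (c : nat) : Prop :=
  (forall x, c <= x -> S x) /\ (forall d, (forall x, d <= x -> S x) -> c <= d).

Definition minimal_generator (S : pred nat) (a : nat) : Prop :=
  S a /\ 0 < a /\ ~ (exists x y, 0 < x /\ 0 < y /\ S x /\ S y /\ a = x + y).

Definition min_gens_seq (S : pred nat) (gens : seq nat) : Prop :=
  sorted ltn gens /\ (forall a, a \in gens <-> minimal_generator S a).

Definition L_card (S : pred nat) (c : nat) : nat := count S (iota 0 c).

(* Main.v *)
Require Import Defs.
From mathcomp Require Import all_boot zify.
From Stdlib Require Import Classical.

Lemma count_iota_sum (P : pred nat) a n :
  count P (iota a n) = \sum_(i < n) P (a + i).
Proof.
elim: n a => [|n IH] a; first by rewrite big_ord0.
by rewrite /= big_ord_recl /= addn0 IH; congr (_ + _); apply: eq_bigr => i _; rewrite addnS.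
Qed.

Lemma count_grid (P : pred nat) q m :
  count P (iota 0 (q * m)) = \sum_(r < m) count (fun j => P (j * m + r)) (iota 0 q).
Proof.
elim: q => [|q IH]; first by rewrite mul0n /= big1.
rewrite mulSnr. rewrite iotaD count_cat IH add0n count_iota_sum -big_split.
apply: eq_bigr => r _.
have -> : iota 0 q.+1 = iota 0 q ++ [:: q] by rewrite -addn1 iotaD.
by rewrite count_cat /= addn0.
Qed.

Lemma div_sum_le a b m q : 0 < m -> a + b < q.+1 * m -> a %/ m + b %/ m <= q.
Proof.
move=> mp h.
have : (a + b) %/ m < q.+1 by rewrite ltn_divLR.
rewrite divnD //; lia.
Qed.

Theorem proposition4p7 (S : pred nat) (c : nat) (gens : seq nat) :
  numerical_semigroup S ->
  is_conductor S c ->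
  min_gens_seq S gens ->
  3 * nth 0 gens 1 > c + nth 0 gens 0 ->
  10 <= size gens ->
  c %% nth 0 gens 0 = 0 ->
  size gens * L_card S c >= c.
Proof.
move=> [S0 [Sadd _]] [Sc _] [Hsort Hgens] Ha2 Hsz Hcm.
set m := nth 0 gens 0 in Ha2 Hcm *.
set a2 := nth 0 gens 1 in Ha2.
have gens_eq : gens = m :: a2 :: behead (behead gens).
  have H : forall s, 10 <= size s -> s = nth 0 s 0 :: nth 0 s 1 :: behead (behead s).
    by case=> [|x [|y s]].
  exact: H.
have mgen : minimal_generator S m by apply/Hgens; rewrite gens_eq inE eqxx.
have a2gen : minimal_generator S a2 by apply/Hgens; rewrite gens_eq !inE eqxx orbT.
have [Sm [mpos _]] := mgen.
have Hsort' : path ltn m (a2 :: behead (behead gens)) by move: Hsort; rewrite {1}gens_eq.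
have ltm : forall x, x \in behead gens -> m < x.
  move=> x; rewrite gens_eq /= => xin.
  move: Hsort'; rewrite (path_sortedE ltn_trans) => /andP [H _]. exact: (allP H x xin).
have lea2 : forall x, x \in behead gens -> a2 <= x.
  move=> x; rewrite gens_eq /= inE => /orP [/eqP -> //|].
  move=> xin; move: Hsort' => /= /andP [_]; rewrite (path_sortedE ltn_trans) => /andP [H _].
  exact: ltnW (allP H x xin).
have gens_beh : forall x, x \in gens -> x != m -> x \in behead gens.
  move=> x; rewrite {1}gens_eq inE => /orP [/eqP -> |]; first by rewrite eqxx.
  by rewrite gens_eq.
have Smul : forall k, S (k * m).
  by elim=> [|k IH]; rewrite ?mul0n // mulSn; apply: Sadd.
have Ssplit : forall x, S x -> 0 < x -> minimal_generator S x \/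
    exists y z, [/\ 0 < y, 0 < z, S y, S z & x = y + z].
  move=> x Sx xp; case: (classic (minimal_generator S x)) => [|H]; first by left.
  right; case: (classic (exists y z, 0 < y /\ 0 < z /\ S y /\ S z /\ x = y + z)).
    by move=> [y [z [? [? [? [? ?]]]]]]; exists y, z.
  by move=> H'; exfalso; apply: H.
have ge_m : forall x, S x -> 0 < x -> m <= x.
  elim/ltn_ind => x IH Sx xp.
  case: (Ssplit x Sx xp) => [/Hgens xg | [y [z [yp zp Sy Sz xe]]]].
    case: (eqVneq x m) => [-> //| xm]; exact/ltnW/ltm/gens_beh.
  have hy : y < x by lia.
  have := IH y hy Sy yp; lia.
have ge_a2 : forall x, S x -> x %% m != 0 -> a2 <= x.
  elim/ltn_ind => x IH Sx xm.
  have xp : 0 < x by case: x {IH Sx} xm; rewrite ?mod0n.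
  case: (Ssplit x Sx xp) => [/Hgens xg | [y [z [yp zp Sy Sz xe]]]].
    apply/lea2/gens_beh => //; apply: contra xm => /eqP ->; by rewrite modnn.
  case: (eqVneq (y %% m) 0) => ym.
    have zm : z %% m != 0 by move: xm; rewrite xe -modnDml ym add0n.
    have hz : z < x by lia.
    have := IH z hz Sz zm; lia.
  have hy : y < x by lia.
  have := IH y hy Sy ym; lia.
set q := c %/ m.
have cq : c = q * m by rewrite {1}(divn_eq c m) Hcm addn0.
pose P r := fun n => S n && (n %% m == r).
pose w r := find (P r) (iota 0 (c + m)).
have wP : forall r, r < m -> [/\ S (w r), w r %% m = r & w r < c + m].
  move=> r rm.
  have hasP : has (P r) (iota 0 (c + m)).
    apply/hasP; exists (c + r); first by rewrite mem_iota; lia.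
    rewrite /P Sc ?leq_addr //= cq -modnDml modnMl add0n modn_small //.
  have := nth_find 0 hasP; rewrite -/(w r) has_find -/(w r) in hasP.
  rewrite size_iota in hasP; rewrite nth_iota // => /andP [Sw /eqP wm].
  by split.
have wmin : forall r n, n < w r -> S n -> n %% m != r.
  move=> r n nw Sn; apply/negP => nm.
  have := before_find 0 nw.
  have ns : n < c + m by move: (find_size (P r) (iota 0 (c + m))); rewrite size_iota -/(w r); lia.
  by rewrite nth_iota // add0n /P Sn nm.
have w0 : w 0 = 0.
  case: (posnP (w 0)) => // wp; exfalso; have := wmin 0 0 wp S0; by rewrite mod0n.
have wApery : forall r x y, r < m -> S x -> S y -> w r = x + y -> x %% m = 0 -> x = 0.
  move=> r x y rm Sx Sy wxy xm; case: (posnP x) => // xp; exfalso.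
  have [Sw wm wlt] := wP r rm.
  have xk : x = (x %/ m).-1 * m + m.
    rewrite {1}(divn_eq x m) xm addn0 -mulSnr prednK // divn_gt0 //; exact: ge_m.
  have hlt : (x %/ m).-1 * m + y < w r by lia.
  have := wmin r _ hlt (Sadd _ _ (Smul _) Sy); apply/negP/negPn/eqP.
  rewrite -wm wxy {2}xk -addnA [m + y]addnC addnA modnDr //.
have wpos : forall r, 0 < r < m -> 0 < w r.
  move=> r /andP [rp rm]; have [_ wm _] := wP r rm.
  by case: (posnP (w r)) wm => // ->; rewrite mod0n => h; move: rp; rewrite -h.
have winj : forall r1 r2 : 'I_m, w r1 = w r2 -> r1 = r2.
  move=> r1 r2 e; apply: val_inj => /=.
  have [_ e1 _] := wP r1 (ltn_ord r1); have [_ e2 _] := wP r2 (ltn_ord r2).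
  by rewrite -e1 -e2 e.
have wgen : forall a, a \in gens -> a %% m != 0 -> w (a %% m) = a.
  move=> a ag am; have rm := ltn_pmod a mpos.
  have [Sw wm wlt] := wP _ rm.
  have [Sa [ap Hna]] := (Hgens a).1 ag.
  case: (ltngtP (w (a %% m)) a) => // h.
    exfalso; apply: Hna.
    have wp : 0 < w (a %% m) by apply: wpos; rewrite rm andbT lt0n.
    have e1 := divn_eq a m; have e2 := divn_eq (w (a %% m)) m.
    rewrite wm in e2.
    have lt : w (a %% m) %/ m < a %/ m.
      by rewrite -(ltn_pmul2r mpos); lia.
    exists (w (a %% m) + (a %/ m - w (a %% m) %/ m).-1 * m), m.
    split; first by rewrite addn_gt0 wp. split => //. split; first by apply: Sadd.
    split => //.
    move: e1 e2 lt; rewrite -/(w (a %% m)).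
    move: (a %% m) (a %/ m) (w (a %% m)) (w (a %% m) %/ m) => R A W B e1 e2 lt.
    have [k hk] : exists k, A = B + k.+1 by exists (A - B).-1; lia.
    rewrite hk in e1 *. have -> : (B + k.+1 - B).-1 = k by lia.
    rewrite e1 e2 !mulnDl mulSn; lia.
  by have := wmin _ _ h Sa; rewrite eqxx.
have gens_pos : forall x, x \in gens -> 0 < x by move=> x /Hgens [_ []].
have w0ng : w 0 \notin gens by rewrite w0; apply/negP => /gens_pos.
have classif : forall r, 0 < r < m -> w r \notin gens ->
    exists a b, [/\ a \in gens, b \in gens, a %% m != 0, b %% m != 0 & w r = a + b].
  move=> r /andP [rp rm] wng.
  have [Sw wm wlt] := wP r rm.
  have summ : forall y z, S y -> S z -> w r = y + z -> 0 < y -> y %% m != 0.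
    move=> y z Sy Sz e yp; apply/eqP => ym.
    by have := wApery r y z rm Sy Sz e ym; lia.
  have mg : forall y z, S y -> S z -> w r = y + z -> 0 < y -> 0 < z -> y \in gens.
    move=> y z Sy Sz e yp zp; apply/Hgens.
    case: (Ssplit y Sy yp) => [//|[y1 [y2 [y1p y2p Sy1 Sy2 ye]]]].
    exfalso.
    have h1 : a2 <= y1.
      apply: (ge_a2 _ Sy1); apply: (summ y1 (y2 + z) Sy1 (Sadd _ _ Sy2 Sz) _ y1p).
      by rewrite e ye addnA.
    have h2 : a2 <= y2.
      apply: (ge_a2 _ Sy2); apply: (summ y2 (y1 + z) Sy2 (Sadd _ _ Sy1 Sz) _ y2p).
      by rewrite e ye [y1 + y2]addnC addnA.
    have h3 : a2 <= z.
      apply: (ge_a2 _ Sz); apply: (summ z y Sz Sy _ zp); by rewrite e addnC.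
    lia.
  case: (Ssplit (w r) Sw (wpos r _)); first by rewrite rp rm.
    by move/Hgens; rewrite (negbTE wng).
  move=> [y [z [yp zp Sy Sz e]]].
  exists y, z; split.
  - exact: (mg y z).
  - by apply: (mg z y) => //; rewrite e addnC.
  - exact: (summ y z).
  - by apply: (summ z y) => //; rewrite e addnC.
  - exact: e.
pose U r := q - w r %/ m.
have Lbound : \sum_(r < m) U r <= L_card S c.
  rewrite /L_card cq count_grid; apply: leq_sum => r _.
  have [Sw wm wlt] := wP r (ltn_ord r).
  set k := w r %/ m.
  rewrite /U -/k.
  case: (leqP q k) => qk; first by rewrite (eqP qk) //; move: qk; rewrite -subn_eq0 => /eqP ->.
  have -> : q = k + (q - k) by lia.
  rewrite iotaD count_cat add0n.
  apply: leq_trans (leq_addl _ _).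
  have hall : all (fun j => S (j * m + r)) (iota k (q - k)).
    apply/allP => j; rewrite mem_iota => /andP [kj _].
    have -> : j * m + r = (j - k) * m + w r.
      rewrite {1}(divn_eq (w r) m) wm -/k addnA -mulnDl subnK //.
    by apply: Sadd.
  by move: hall; rewrite all_count => /eqP ->; rewrite size_iota addKn.
set nu := size gens.
pose Gs := [set r : 'I_m | w r \in gens].
have cardG : #|Gs| <= nu - 1.
  have H : size [seq w (nat_of_ord r) | r <- enum Gs] <= size (behead gens).
    apply: uniq_leq_size.
      by rewrite map_inj_in_uniq ?enum_uniq // => r1 r2 _ _; apply: winj.
    move=> x /mapP [r hr ->]; rewrite mem_enum inE in hr.
    apply: gens_beh => //; apply/eqP => e.
    have [_ wm _] := wP r (ltn_ord r).
    move: wm; rewrite e modnn => r0.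
    by move: hr; rewrite -r0 (negbTE w0ng).
  by move: H; rewrite size_map -cardE size_behead subn1.
have cardsum : forall (P Q : pred 'I_m), \sum_(r < m | P r) (Q r : nat) = #|[set r : 'I_m | P r && Q r]|.
  move=> P0 Q0; rewrite -sum1dep_card big_mkcondr; apply: eq_bigr => r _; by case: (Q0 r).
pose pr (r : 'I_m) := [pick st : 'I_m * 'I_m |
   (w st.1 \in gens) && (w st.2 \in gens) && (w r == w st.1 + w st.2)].
pose al r := (odflt (r, r) (pr r)).1.
pose be r := (odflt (r, r) (pr r)).2.
have prop : forall r : 'I_m, w r \notin gens -> 0 < r ->
    [/\ w (al r) \in gens, w (be r) \in gens & w r = w (al r) + w (be r)].
  move=> r ng rp; rewrite /al /be /pr; case: pickP => [[s t] /= /andP [/andP [Hs Ht] /eqP e] | H] //.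
  exfalso; have [a [b [ag bg am bm e]]] := classif r (introT andP (conj rp (ltn_ord r))) ng.
  pose s := Ordinal (ltn_pmod a mpos); pose t := Ordinal (ltn_pmod b mpos).
  have := H (s, t); rewrite /= wgen // wgen // ag bg e eqxx //.
have main : \sum_(r < m | (w r \notin gens) && (0 < r)) q <= nu * \sum_(r < m | w r \in gens) U r.
  have step1 : \sum_(r < m | (w r \notin gens) && (0 < r)) q <=
       \sum_(r < m | (w r \notin gens) && (0 < r)) (U (al r) + U (be r)).
    apply: leq_sum => r /andP [ng rp].
    have [ga gb e] := prop r ng rp.
    have [_ _ wlt] := wP r (ltn_ord r).
    have : w (al r) %/ m + w (be r) %/ m <= q.
      apply: div_sum_le => //; rewrite -e mulSn addnC -cq //.
    rewrite /U; lia.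
  apply: (leq_trans step1).
  have step2 : forall r : 'I_m, (w r \notin gens) && (0 < r) ->
      U (al r) + U (be r) = \sum_(s < m | w s \in gens) U s * ((al r == s) + (be r == s)).
    move=> r /andP [ng rp]; have [ga gb e] := prop r ng rp.
    under eq_bigr do rewrite mulnDr.
    rewrite big_split /=.
    rewrite (bigD1 (al r)) //= eqxx muln1 big1 ?addn0; last first.
      by move=> s /andP [_ ne]; rewrite eq_sym (negbTE ne) muln0.
    rewrite (bigD1 (be r)) //= eqxx muln1 big1 ?addn0 //.
    by move=> s /andP [_ ne]; rewrite eq_sym (negbTE ne) muln0.
  rewrite (eq_bigr _ step2) exchange_big /=.
  rewrite big_distrr /=.
  apply: leq_sum => s gs.
  rewrite -big_distrr /= [X in _ <= X]mulnC leq_mul2l; apply/orP; right.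
  have -> : \sum_(i < m | (w i \notin gens) && (0 < i)) ((al i == s) + (be i == s)) =
      \sum_(i < m | (w i \notin gens) && (0 < i)) ((al i == s) || (be i == s)) +
      \sum_(i < m | (w i \notin gens) && (0 < i)) ((al i == s) && (be i == s)).
    by rewrite -big_split; apply: eq_bigr => i _; case: (al i == s); case: (be i == s).
  rewrite !cardsum.
  have b1 : #|[set r : 'I_m | ((w r \notin gens) && (0 < r)) && ((al r == s) || (be r == s))]| <= #|Gs|.
    pose f (r : 'I_m) := if al r == s then be r else al r.
    have fw : forall r : 'I_m, r \in [set r : 'I_m | ((w r \notin gens) && (0 < r)) && ((al r == s) || (be r == s))] ->
        w r = w s + w (f r).
      move=> r; rewrite inE => /andP [/andP [ng rp] o].
      have [_ _ e] := prop r ng rp.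
      rewrite /f; case: eqP => [<- //|ne].
      by move: o; rewrite (introF eqP ne) /= => /eqP <-; rewrite addnC.
    rewrite -(card_in_imset (f := f)).
      apply: subset_leq_card; apply/subsetP => x /imsetP [r hr ->].
      move: hr; rewrite !inE => /andP [/andP [ng rp] _].
      have [ga gb _] := prop r ng rp.
      by rewrite /f; case: ifP.
    move=> r1 r2 h1 h2 e; apply: winj.
    by rewrite (fw r1 h1) (fw r2 h2) e.
  have b2 : #|[set r : 'I_m | ((w r \notin gens) && (0 < r)) && ((al r == s) && (be r == s))]| <= 1.
    apply/card_le1_eqP => r1 r2; rewrite !inE => /andP [/andP [ng1 rp1] /andP [/eqP a1 /eqP b1']].
    move=> /andP [/andP [ng2 rp2] /andP [/eqP a2' /eqP b2']].
    apply: winj.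
    have [_ _ e1] := prop r1 ng1 rp1; have [_ _ e2] := prop r2 ng2 rp2.
    by rewrite e1 e2 a1 b1' a2' b2'.
  have : 1 <= nu by rewrite /nu; lia.
  lia.
apply: (leq_trans _ (leq_mul (leqnn nu) Lbound)).
rewrite cq.
have qm : q * m = \sum_(r < m) q by rewrite sum_nat_const card_ord mulnC.
rewrite qm (bigID (fun r : 'I_m => w r \in gens)) /=.
rewrite [X in _ <= nu * X](bigID (fun r : 'I_m => w r \in gens)) /=.
rewrite [X in _ + X <= _](bigID (fun r : 'I_m => 0 < r)) /=.
rewrite [X in _ <= nu * (_ + X)](bigID (fun r : 'I_m => 0 < r)) /=.
have e1 : \sum_(r < m | (w r \notin gens) && ~~ (0 < r)) q =
          \sum_(r < m | (w r \notin gens) && ~~ (0 < r)) U r.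
  apply: eq_bigr => r /andP [_]; rewrite -eqn0Ngt => /eqP r0.
  by rewrite /U r0 w0 div0n subn0.
have e2 : q <= \sum_(r < m | (w r \notin gens) && ~~ (0 < r)) U r.
  rewrite (bigD1 (Ordinal mpos)) /=; last by rewrite w0ng.
  by rewrite /U w0 div0n subn0 leq_addr.
have e3 : \sum_(r < m | w r \in gens) q = #|Gs| * q.
  by rewrite -sum_nat_const; apply: eq_bigl => r; rewrite inE.
rewrite e1 e3.
move: main e2 cardG Hsz.
move: (\sum_(r < m | (w r \notin gens) && (0 < r)) q) (\sum_(r < m | (w r \notin gens) && ~~ (0 < r)) U r).
move: (\sum_(r < m | w r \in gens) U r) (\sum_(r < m | (w r \notin gens) && (0 < r)) U r) #|Gs|.
move=> A B C Z D h1 h2 h3 h4.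
have h5 : C * q <= (nu - 1) * D by apply: leq_mul.
have nupos : 1 <= nu by rewrite /nu; lia.
move: h5 h1 nupos; clear; move: nu => n; nia.
Qed.
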